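(* Let $g:\mathbb B^3\to\mathbb B$ be the Boolean function induced by the formula $v_1\wedge v_2\wedge v_3$, i.e. $g(b_1,b_2,b_3)=T$ iff $b_1=b_2=b_3=T$. There is no instruction sequence $X\in\mathrm{IS}^{na}_{br}$ such that: no jump instruction occurs in $X$, the termination instruction $!$ occurs at most once in $X$, the basic instruction $\mathrm{out}.\mathrm{set}{:}F$ does not occur in $X$ (in any plain, positive test or negative test instruction), and $X$ computes $g$.
   Context: $\mathbb B=\{T,F\}$. A primitive instruction is one of: a plain basic instruction $a$, a positive test instruction $+a$, a negative test instruction $-a$ (for a basic instruction $a$), a forward jump instruction $\#l$ ($l\in\mathbb N$), or the termination instruction $!$. An instruction sequence is a finite nonempty sequence $X=u_1;\dots;u_k$ of primitive instructions; its length is $|X|=k$. Basic instructions have the form $f.m$ where the focus $f$ is one of $\mathrm{in}{:}i$, $\mathrm{aux}{:}i$ ($i\ge 1$) or $\mathrm{out}$, each naming a Boolean register, and the method $m$ is one of $\mathrm{set}{:}T$, $\mathrm{set}{:}F$, $\mathrm{get}$. Executing $f.\mathrm{set}{:}b$ sets register $f$ to $b$ and yields reply $b$; executing $f.\mathrm{get}$ leaves the register unchanged and yields its content as reply. Execution of $X=u_1;\dots;u_k$: a counter starts at $1$. If the counter exceeds $k$, execution deadlocks. At position $i$: if $u_i=!$, execution terminates; if $u_i=\#l$, execution deadlocks if $l=0$ and otherwise the counter becomes $i+l$; if $u_i$ is $a$, $+a$ or $-a$, the basic instruction $a$ is executed yielding reply $r$, and the counter becomes $i+1$ for $u_i=a$;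 for $u_i=+a$ it becomes $i+1$ if $r=T$ and $i+2$ if $r=F$; for $u_i=-a$ it becomes $i+1$ if $r=F$ and $i+2$ if $r=T$. $\mathrm{IS}_{br}$ is the set of instruction sequences in which every basic instruction occurring belongs to $\{f.\mathrm{get}: f=\mathrm{in}{:}i \text{ or } f=\mathrm{aux}{:}i\}\cup\{f.\mathrm{set}{:}b: f=\mathrm{aux}{:}i \text{ or } f=\mathrm{out},\ b\in\mathbb B\}$. $\mathrm{IS}^{na}_{br}\subseteq \mathrm{IS}_{br}$ is the set of those in which every basic instruction belongs to $\{\mathrm{in}{:}i.\mathrm{get}: i\ge1\}\cup\{\mathrm{out}.\mathrm{set}{:}T,\mathrm{out}.\mathrm{set}{:}F\}$. $X\in\mathrm{IS}_{br}$ computes $f:\mathbb B^n\to\mathbb B$ if for every $(b_1,\dots,b_n)\in\mathbb B^n$: when $X$ is executed with register $\mathrm{in}{:}j$ initialised to $b_j$ ($j\le n$) and all registers $\mathrm{aux}{:}i$ and $\mathrm{out}$ initialised to $F$, execution terminates (does not deadlock) without ever executing a basic instruction with focus $\mathrm{in}{:}j$ for $j>n$, and at termination register $\mathrm{out}$ contains $f(b_1,\dots,b_n)$. *)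

(* Defs.v *)
From mathcomp Require Import all_boot.
Set Implicit Arguments. Unset Strict Implicit. Unset Printing Implicit Defensive.

(* Foci: in:i, aux:i (i >= 1), out.  Methods: set:b, get. *)
Inductive focus := Fin of nat | Faux of nat | Fout.
Inductive method := MSet of bool | MGet.
Definition basic := (focus * method)%type.

Inductive instr :=
| Plain of basic | PTest of basic | NTest of basic | Jump of nat | Term.

Definition iseq := seq instr.

(* Register state: in, aux indexed by nat (index 0 unused), and out. *)
Record state := State { rin : nat -> bool; raux : nat -> bool; rout : bool }.

Definition upd (f : nat -> bool) (i : nat) (b : bool) : nat -> bool :=
  fun j => if j == i then b else f j.

Definition get_reg (f : focus) (s : state) : bool :=
  match f with Fin i => rin s i | Faux i => raux s i | Fout => rout s end.

Definition set_reg (f : focus) (b : bool) (s : state) : state :=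
  match f with
  | Fin i => State (upd (rin s) i b) (raux s) (rout s)
  | Faux i => State (rin s) (upd (raux s) i b) (rout s)
  | Fout => State (rin s) (raux s) b
  end.

Definition exec_basic (a : basic) (s : state) : bool * state :=
  match a.2 with
  | MSet b => (b, set_reg a.1 b s)
  | MGet => (get_reg a.1 s, s)
  end.

(* Instruction at (1-based) position pc, or None if out of range. *)
Definition fetch (X : iseq) (pc : nat) : option instr :=
  if (1 <= pc) && (pc <= size X) then Some (nth Term X pc.-1) else None.

Definition focus_ok (n : nat) (a : basic) : bool :=
  match a.1 with Fin j => j <= n | _ => true end.

(* runs X n pc s s' : execution of X from position pc in state s terminates
   (reaches !, no deadlock) in final state s', never executing a basic
   instruction with focus in:j for j > n. *)
Inductive runs (X : iseq) (n : nat) : nat -> state -> state -> Prop :=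
| runs_term pc s :
    fetch X pc = Some Term -> runs X n pc s s
| runs_jump pc l s s' :
    fetch X pc = Some (Jump l) -> 0 < l ->
    runs X n (pc + l) s s' -> runs X n pc s s'
| runs_plain pc a s s' :
    fetch X pc = Some (Plain a) -> focus_ok n a ->
    runs X n pc.+1 (exec_basic a s).2 s' -> runs X n pc s s'
| runs_ptest pc a s s' :
    fetch X pc = Some (PTest a) -> focus_ok n a ->
    runs X n (if (exec_basic a s).1 then pc.+1 else pc.+2) (exec_basic a s).2 s' ->
    runs X n pc s s'
| runs_ntest pc a s s' :
    fetch X pc = Some (NTest a) -> focus_ok n a ->
    runs X n (if (exec_basic a s).1 then pc.+2 else pc.+1) (exec_basic a s).2 s' ->
    runs X n pc s s'.

(* Initial state: in:j = b_j for 1 <= j <= n (other in registers are never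
   read by a computing X; set to F), all aux and out = F. *)
Definition init_state (n : nat) (bs : n.-tuple bool) : state :=
  State (fun j => nth false bs j.-1 && (1 <= j)) (fun _ => false) false.

Definition computes (n : nat) (X : iseq) (f : n.-tuple bool -> bool) : Prop :=
  forall bs : n.-tuple bool,
    exists s', runs X n 1 (init_state bs) s' /\ rout s' = f bs.

Definition basic_of (u : instr) : option basic :=
  match u with Plain a | PTest a | NTest a => Some a | _ => None end.

Definition na_basic (a : basic) : bool :=
  match a with
  | (Fin i, MGet) => 1 <= i
  | (Fout, MSet _) => true
  | _ => false
  end.

Definition na_instr (u : instr) : bool :=
  match basic_of u with Some a => na_basic a | None => true end.

Definition in_IS_na (X : iseq) : Prop := X <> [::] /\ all na_instr X.

Definition is_jump (u : instr) : bool := if u is Jump _ then true else false.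
Definition is_term (u : instr) : bool := if u is Term then true else false.
Definition is_outsetF (u : instr) : bool :=
  match basic_of u with Some (Fout, MSet false) => true | _ => false end.

Definition g3 (bs : 3.-tuple bool) : bool :=
  [&& tnth bs (inord 0), tnth bs (inord 1) & tnth bs (inord 2)].

(* Main.v *)
Require Import Defs.
From mathcomp Require Import all_boot.

Lemma fetch_mem X pc u : fetch X pc = Some u ->
  [/\ pc.-1 < size X, 1 <= pc, pc <= size X & u = nth Term X pc.-1].
Proof.
rewrite /fetch; case: ifP => // /andP [H1 H2] [<-]; split => //.
by case: pc H1 H2 => //.
Qed.

Lemma instr_ok X pc u : all na_instr X -> ~~ has is_outsetF X ->
  fetch X pc = Some u -> forall a, basic_of u = Some a ->
  (exists i, a = (Fin i, MGet) /\ 1 <= i) \/ a = (Fout, MSet true).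
Proof.
move=> Hna HF /fetch_mem [Hu _ _ ->] a Ha.
have H1 := (all_nthP Term Hna) _ Hu.
have H2 : ~~ is_outsetF (nth Term X pc.-1).
  apply/negP=> H; move/negP: HF; apply; apply/(has_nthP Term); by exists pc.-1.
rewrite /na_instr Ha in H1. rewrite /is_outsetF Ha in H2.
move: a H1 H2 {Ha} => [[i|i|] [[|]|]] //= H1 H2; eauto.
Qed.

Lemma runs_inv X n pc s s' : all na_instr X -> ~~ has is_outsetF X ->
  runs X n pc s s' -> rin s' = rin s /\ (rout s -> rout s').
Proof.
move=> Hna HF; elim => //=.
- move=> pc0 a s0 s1 Hf _ _ [-> H]; have := @instr_ok _ _ _ Hna HF Hf a erefl.
  by case=> [[i [Ea _]]|Ea]; subst a; split=> // ?; apply: H.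
- move=> pc0 a s0 s1 Hf _ _ [-> H]; have := @instr_ok _ _ _ Hna HF Hf a erefl.
  by case=> [[i [Ea _]]|Ea]; subst a; split=> // ?; apply: H.
- move=> pc0 a s0 s1 Hf _ _ [-> H]; have := @instr_ok _ _ _ Hna HF Hf a erefl.
  by case=> [[i [Ea _]]|Ea]; subst a; split=> // ?; apply: H.
Qed.

Lemma runs_end X n pc s s' : runs X n pc s s' ->
  exists q, pc <= q /\ fetch X q = Some Term.
Proof.
elim.
- move=> pc0 s0 H; by exists pc0.
- move=> pc0 l s0 s1 _ _ _ [q [H1 H2]]; exists q; split => //.
  exact: leq_trans (leq_addr _ _) H1.
- move=> pc0 a s0 s1 _ _ _ [q [H1 H2]]; exists q; split => //.
  exact: ltnW.
- move=> pc0 a s0 s1 _ _ _ [q [H1 H2]]; exists q; split => //.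
  case: ifP H1 => _ H1; [exact: ltnW|exact: leq_trans (leqnSn _) (ltnW H1)].
- move=> pc0 a s0 s1 _ _ _ [q [H1 H2]]; exists q; split => //.
  case: ifP H1 => _ H1; [exact: leq_trans (leqnSn _) (ltnW H1)|exact: ltnW].
Qed.

Lemma count_uniq (s : seq instr) i j : count is_term s <= 1 ->
  i < size s -> j < size s -> is_term (nth Term s i) -> is_term (nth Term s j) -> i = j.
Proof.
elim: s i j => [|x s IH] [|i] [|j] //=.
- move=> Hc _ Hj Hx Hn; have : 0 < count is_term s.
    rewrite -has_count; apply/(has_nthP Term); by exists j.
  by rewrite Hx in Hc; case: (count is_term s) Hc.
- move=> Hc Hi _ Hn Hx; have : 0 < count is_term s.
    rewrite -has_count; apply/(has_nthP Term); by exists i.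
  by rewrite Hx in Hc; case: (count is_term s) Hc.
- move=> Hc Hi Hj H1 H2; congr S; apply: IH => //.
  exact: leq_trans (leq_addl _ _) Hc.
Qed.

Lemma term_uniq X q1 q2 : count is_term X <= 1 ->
  fetch X q1 = Some Term -> fetch X q2 = Some Term -> q1 = q2.
Proof.
move=> Hc /fetch_mem [_ a1 b1 e1] /fetch_mem [_ a2 b2 e2].
have : q1.-1 = q2.-1.
  apply: (@count_uniq X _ _ Hc); rewrite -?e1 -?e2 //.
  by case: q1 a1 b1 {e1}. by case: q2 a2 b2 {e2}.
by case: q1 a1 {b1 e1} => //; case: q2 a2 {b2 e2} => // ? ? ? ? /= ->.
Qed.

Lemma lemA X n pc s s' : all na_instr X -> ~~ has is_outsetF X ->
  runs X n pc s s' -> rout s = false -> rout s' = true ->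
  exists p u, [/\ pc <= p, fetch X p = Some u, basic_of u = Some (Fout, MSet true)
     & exists q, p < q /\ fetch X q = Some Term].
Proof.
move=> Hna HF; elim.
- by move=> ? ? _ ->.
- move=> pc0 l s0 s1 _ _ _ IH H0 H1; have [p [u [A B C D]]] := IH H0 H1.
  exists p, u; split => //; exact: leq_trans (leq_addr _ _) A.
- move=> pc0 a s0 s1 Hf _ Hr IH H0 H1.
  case: (@instr_ok _ _ _ Hna HF Hf a erefl) => [[i [Ea _]]|Ea]; subst a.
  + have [p [u [A B C D]]] := IH H0 H1; exists p, u; split => //; exact: ltnW.
  + exists pc0, (Plain (Fout, MSet true)); split => //.
    by have [q [A B]] := @runs_end _ _ _ _ _ Hr; exists q.
- move=> pc0 a s0 s1 Hf _ Hr IH H0 H1.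
  case: (@instr_ok _ _ _ Hna HF Hf a erefl) => [[i [Ea _]]|Ea]; subst a.
  + have [p [u [A B C D]]] := IH H0 H1; exists p, u; split => //.
    by case: ifP A => _ A; [exact: ltnW|exact: leq_trans (leqnSn _) (ltnW A)].
  + exists pc0, (PTest (Fout, MSet true)); split => //.
    have [q [A B]] := @runs_end _ _ _ _ _ Hr; exists q; split => //; move: A => /= A.
- move=> pc0 a s0 s1 Hf _ Hr IH H0 H1.
  case: (@instr_ok _ _ _ Hna HF Hf a erefl) => [[i [Ea _]]|Ea]; subst a.
  + have [p [u [A B C D]]] := IH H0 H1; exists p, u; split => //.
    by case: ifP A => _ A; [exact: leq_trans (leqnSn _) (ltnW A)|exact: ltnW].
  + exists pc0, (NTest (Fout, MSet true)); split => //.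
    have [q [A B]] := @runs_end _ _ _ _ _ Hr; exists q; split => //; move: A => /= A.
    exact: ltnW A.
Qed.

Lemma lemB X n pc s s' : all na_instr X -> ~~ has is_outsetF X ->
  ~~ has is_jump X -> count is_term X <= 1 ->
  runs X n pc s s' -> rout s' = false ->
  forall p u t, pc <= p -> p < t -> fetch X t = Some Term ->
  fetch X p = Some u -> basic_of u = Some (Fout, MSet true) ->
  exists i, [/\ 1 <= i, i <= n &
    ((fetch X p.-1 = Some (PTest (Fin i, MGet)) /\ rin s' i = false) \/
     (fetch X p.-1 = Some (NTest (Fin i, MGet)) /\ rin s' i = true))].
Proof.
move=> Hna HF HJ Hc; elim.
- move=> pc0 s0 Hf _ p u t A B Ht.
  have E := @term_uniq _ _ _ Hc Hf Ht; subst t.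
  by rewrite leqNgt B in A.
- move=> pc0 l s0 s1 Hf; exfalso.
  have [H _ _ E] := @fetch_mem _ _ _ Hf; move/negP: HJ; apply.
  apply/(has_nthP Term); exists pc0.-1 => //; by rewrite -E.
- move=> pc0 a s0 s1 Hf Hok Hr IH H0 p u t A B Ht Hu Hb.
  have [Hin Hout] := @runs_inv _ _ _ _ _ Hna HF Hr.
  case: (@instr_ok _ _ _ Hna HF Hf a erefl) => [[i [Ea _]]|Ea]; subst a.
  + move: A; rewrite leq_eqVlt => /orP [/eqP E|A].
      by subst p; rewrite Hf in Hu; case: Hu Hb => <-.
    by apply: (IH H0 p u t _ B Ht Hu Hb).
  + by rewrite H0 in Hout; have := Hout erefl.
- move=> pc0 a s0 s1 Hf Hok Hr IH H0 p u t A B Ht Hu Hb.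
  have [Hin Hout] := @runs_inv _ _ _ _ _ Hna HF Hr.
  case: (@instr_ok _ _ _ Hna HF Hf a erefl) => [[i [Ea Hi]]|Ea]; subst a.
  + move: A; rewrite leq_eqVlt => /orP [/eqP E|A].
      by subst p; rewrite Hf in Hu; case: Hu Hb => <-.
    move: IH Hr Hin; rewrite /=; case Ei: (rin s0 i) => IH Hr Hin.
      by apply: (IH H0 p u t _ B Ht Hu Hb).
    move: A; rewrite leq_eqVlt => /orP [/eqP E|A].
      subst p; exists i; split => //; left; split => //; by rewrite Hin.
    by apply: (IH H0 p u t _ B Ht Hu Hb).
  + by rewrite H0 in Hout; have := Hout erefl.
- move=> pc0 a s0 s1 Hf Hok Hr IH H0 p u t A B Ht Hu Hb.
  have [Hin Hout] := @runs_inv _ _ _ _ _ Hna HF Hr.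
  case: (@instr_ok _ _ _ Hna HF Hf a erefl) => [[i [Ea Hi]]|Ea]; subst a.
  + move: A; rewrite leq_eqVlt => /orP [/eqP E|A].
      by subst p; rewrite Hf in Hu; case: Hu Hb => <-.
    move: IH Hr Hin; rewrite /=; case Ei: (rin s0 i) => IH Hr Hin; last first.
      by apply: (IH H0 p u t _ B Ht Hu Hb).
    move: A; rewrite leq_eqVlt => /orP [/eqP E|A].
      subst p; exists i; split => //; right; split => //; by rewrite Hin.
    by apply: (IH H0 p u t _ B Ht Hu Hb).
  + by rewrite H0 in Hout; have := Hout erefl.
Qed.

Lemma g3E (bs : 3.-tuple bool) : g3 bs = [&& nth false bs 0, nth false bs 1 & nth false bs 2].
Proof. by rewrite /g3 !(tnth_nth false) !inordK. Qed.

Theorem theorem3 :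
  ~ exists X : iseq,
      [/\ in_IS_na X,
          ~~ has is_jump X,
          count is_term X <= 1,
          ~~ has is_outsetF X
        & computes X g3].
Proof.
move=> [X [[_ Hna] HJ Hc HF Hcomp]].
have [s1 [R1 E1]] := Hcomp [tuple true; true; true].
rewrite g3E /= in E1.
have [p [u [A Hu Hb [t [Hpt Ht]]]]] := @lemA X 3 1 _ _ Hna HF R1 erefl E1.
have key : forall bs : 3.-tuple bool, g3 bs = false -> exists i, [/\ 1 <= i, i <= 3 &
    ((fetch X p.-1 = Some (PTest (Fin i, MGet)) /\ rin (init_state bs) i = false) \/
     (fetch X p.-1 = Some (NTest (Fin i, MGet)) /\ rin (init_state bs) i = true))].
  move=> bs Hg; have [s2 [R2 E2]] := Hcomp bs; rewrite Hg in E2.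
  have [i [H1 H2 H3]] := @lemB _ _ _ _ _ Hna HF HJ Hc R2 E2 p u t A Hpt Ht Hu Hb.
  have [Hin _] := @runs_inv _ _ _ _ _ Hna HF R2.
  by rewrite Hin in H3; exists i.
have [i [H1 H2 [[F1 _]|[_ F2]]]] := key [tuple false; false; false] ltac:(by rewrite g3E); last first.
  by move: F2; case: i {H1 H2} => [|[|[|[|i]]]] //=; rewrite nth_nil.
have contra : forall bs : 3.-tuple bool, g3 bs = false -> rin (init_state bs) i = true -> False.
  move=> bs Hg Hr; have [j [_ _ [[G G']|[G G']]]] := key bs Hg; rewrite G in F1.
    by case: F1 => Ej; subst j; rewrite Hr in G'.
  by [].
case: i H1 H2 F1 contra => [|[|[|[|i]]]] // _ _ _ contra.
- by apply: (contra [tuple true; false; false]); rewrite ?g3E.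
- by apply: (contra [tuple false; true; false]); rewrite ?g3E.
- by apply: (contra [tuple false; false; true]); rewrite ?g3E.
Qed.
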